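(* Let $B$ be a path-connected space, $b_0\in B$, and let $p\colon E\to B$ be a disk-hedgehog covering. Then for every small loop $\alpha$ at $b_0$, the class $[\alpha]$ is the neutral element of the monodromy group $\pi(p,b_0)$.
   Context: All maps are continuous; a Peano space is a connected, locally path-connected space. For a class $\mathcal{P}$ of spaces, $p\colon E\to B$ is a $\mathcal{P}$-covering if for every $e_0\in E$, $X\in\mathcal{P}$, $x_0\in X$ and map $f\colon X\to B$ with $f(x_0)=p(e_0)$ there is a unique map $g\colon X\to E$ with $p\circ g=f$, $g(x_0)=e_0$. A directed wedge is $(Z,z_0)=\bigvee_{s\in S}(Z_s,z_s)$, a wedge of pointed Peano spaces indexed by a directed set $S$, topologized so that $U\subset Z\setminus\{z_0\}$ is open iff each $U\cap Z_s$ is open, and $U\ni z_0$ is an open neighborhood of $z_0$ iff each $U\cap Z_s$ is open and there is $t\in S$ with $Z_s\subset U$ for all $s>t$. A disk-hedgehog is a directed wedge with each $Z_s\cong D^2$; a disk-hedgehog covering is a $\mathcal{P}$-covering for $\mathcal{P}$ the class of all disk-hedgehogs (paths lift uniquely). The monodromy group $\pi(p,b_0)$ is the set of loops at $b_0$ modulo $\alpha\sim\beta$ iff any lifts $\tilde\alpha,\tilde\beta$ with $\tilde\alpha(0)=\tilde\beta(0)$ satisfy $\tilde\alpha(1)=\tilde\beta(1)$, with product induced by concatenation; $[\alpha]$ is neutral iff all lifts of $\alpha$ are loops. A loop $\alpha$ at $b_0$ is small if for every neighborhood $U$ of $b_0$ in $B$, $\alpha$ is homotopic relative to $\{0,1\}$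 (endpoints fixed at $b_0$) to a loop contained in $U$. *)

(* Defs.v *)
From HB Require Import structures.
From mathcomp Require Import all_boot all_order all_algebra.
From mathcomp Require Import all_classical all_reals all_analysis.
From mathcomp Require Import Rstruct Rstruct_topology.
Set Implicit Arguments.
Unset Strict Implicit.
Unset Printing Implicit Defensive.
Import Order.TTheory GRing.Theory Num.Theory.
Local Open Scope classical_set_scope.
Local Open Scope ring_scope.

Notation RR := Rdefinitions.R.

(* A path in T is a map R -> T continuous on [0,1]; only its values on
   [0,1] matter. *)
Definition unitI : set RR := [set t | 0 <= t <= 1].
Definition unitSq : set (RR * RR) := [set st | unitI st.1 /\ unitI st.2].

Definition is_path {T : topologicalType} (a : RR -> T) :=
  {within unitI, continuous a}.

Definition is_loop_at {T : topologicalType} (x : T) (a : RR -> T) :=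
  is_path a /\ a 0 = x /\ a 1 = x.

Definition path_connected (T : topologicalType) :=
  forall x y : T, exists a : RR -> T, is_path a /\ a 0 = x /\ a 1 = y.

Definition loop_homotopic {T : topologicalType} (x : T) (a b : RR -> T) :=
  exists H : RR * RR -> T,
    {within unitSq, continuous H} /\
    (forall t, unitI t -> H (t, 0) = a t) /\
    (forall t, unitI t -> H (t, 1) = b t) /\
    (forall s, unitI s -> H (0, s) = x /\ H (1, s) = x).

Definition small_loop {T : topologicalType} (x : T) (a : RR -> T) :=
  is_loop_at x a /\
  forall U : set T, nbhs x U ->
    exists b : RR -> T, is_loop_at x b /\ (forall t, unitI t -> U (b t)) /\
      loop_homotopic x a b.

Definition disk : set (RR * RR) := [set q | q.1 ^+ 2 + q.2 ^+ 2 <= 1].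
Definition disk_open (A : set (RR * RR)) :=
  exists O : set (RR * RR), open O /\ A = O `&` disk.

Definition directed_rel (S : Type) (le : S -> S -> Prop) :=
  (exists s : S, True) /\ (forall s, le s s) /\
  (forall r s t, le r s -> le s t -> le r t) /\
  (forall s t, exists u, le s u /\ le t u).

Definition gt_rel (S : Type) (le : S -> S -> Prop) (s t : S) :=
  le t s /\ ~ le s t.

(* The directed wedge of copies of D^2 indexed by S, the s-th copy pointed
   at base s \in D^2.  A point is either the wedge point (None) or a pair
   (s, x) with x in D^2 and x <> base s. *)
Definition hh_pt (S : Type) (base : S -> RR * RR) :=
  option {q : S * (RR * RR) | disk q.2 /\ q.2 <> base q.1}.

Definition hh_inj (S : Type) (base : S -> RR * RR) (s : S) (x : RR * RR)
  : hh_pt base :=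
  match pselect (disk x /\ x <> base s) with
  | left h => Some (exist (fun q : S * (RR * RR) => disk q.2 /\ q.2 <> base q.1)
                          (s, x) h)
  | right _ => None
  end.

Definition hh_open (S : Type) (le : S -> S -> Prop) (base : S -> RR * RR)
    (U : set (hh_pt base)) :=
  (forall s : S, disk_open [set x | disk x /\ U (hh_inj base s x)]) /\
  (U None -> exists t : S, forall s, gt_rel le s t ->
                forall x, disk x -> U (hh_inj base s x)).

Definition hh_continuous (S : Type) (le : S -> S -> Prop)
    (base : S -> RR * RR) (T : topologicalType) (f : hh_pt base -> T) :=
  forall V : set T, open V -> @hh_open S le base (f @^-1` V).

Definition disk_hedgehog_covering (E B : topologicalType) (p : E -> B) :=
  continuous p /\
  forall (S : Type) (le : S -> S -> Prop) (base : S -> RR * RR),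
    directed_rel le -> (forall s, disk (base s)) ->
    forall (e0 : E) (x0 : hh_pt base) (f : hh_pt base -> B),
      @hh_continuous S le base B f -> f x0 = p e0 ->
      exists! g : hh_pt base -> E,
        @hh_continuous S le base E g /\ (forall x, p (g x) = f x) /\ g x0 = e0.

Definition is_lift (E B : topologicalType) (p : E -> B) (a : RR -> B)
    (la : RR -> E) :=
  is_path la /\ forall t, unitI t -> p (la t) = a t.

Definition monodromy_equiv (E B : topologicalType) (p : E -> B)
    (a b : RR -> B) :=
  forall la lb : RR -> E, is_lift p a la -> is_lift p b lb ->
    la 0 = lb 0 -> la 1 = lb 1.

(* the constant loop, representing the neutral element of pi(p, b0) *)
Definition cst_loop (B : Type) (b0 : B) : RR -> B := fun _ => b0.

(* Main.v *)
Require Import Defs.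
From mathcomp Require Import all_boot all_order all_algebra.
From mathcomp Require Import all_classical all_reals all_analysis.
From mathcomp Require Import Rstruct Rstruct_topology.
From mathcomp Require Import ring lra.
Import Order.TTheory GRing.Theory Num.Theory.
Local Open Scope classical_set_scope.
Local Open Scope ring_scope.
Set Implicit Arguments.
Unset Strict Implicit.

Definition wc {X Y : topologicalType} (A : set X) (f : X -> Y) :=
  forall V, open V -> exists2 W, open W & W `&` A = f @^-1` V `&` A.

Lemma wcP {X Y : topologicalType} (A : set X) (f : X -> Y) :
  {within A, continuous f} <-> wc A f.
Proof.
rewrite continuousP; split => h V oV.
  by have /open_subspaceP := h V oV.
by apply/open_subspaceP; exact: h.
Qed.

Lemma wc_comp {X Y Z : topologicalType} (A : set X) (C : set Z) (f : X -> Y) (g : Z -> X) :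
  wc A f -> continuous g -> (forall z, C z -> A (g z)) -> wc C (f \o g).
Proof.
move=> hf hg hC V oV; have [W oO hO] := hf V oV.
exists (g @^-1` W); first by move/continuousP: hg; apply.
apply/seteqP; split => z [h1 h2]; split => //.
  have : (W `&` A) (g z) by split => //; exact: hC.
  by rewrite hO => -[].
have : ((f @^-1` V) `&` A) (g z) by split => //; exact: hC.
by rewrite -hO => -[].
Qed.

Lemma wc_post {X Y Z : topologicalType} (A : set X) (f : X -> Y) (h : Y -> Z) :
  wc A f -> continuous h -> wc A (h \o f).
Proof.
move=> hf hh V oV; have [W oO hO] := hf (h @^-1` V) (proj1 (continuousP _) hh V oV).
by exists W.
Qed.

Lemma wc_cst {X Y : topologicalType} (A : set X) (y : Y) : wc A (fun _ => y).
Proof.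
move=> V oV; case: (pselect (V y)) => hy.
  exists setT; first exact: openT.
  by apply/seteqP; split => z [].
exists set0; first exact: open0.
by apply/seteqP; split => z [].
Qed.

Definition dcont {T : topologicalType} (phi : RR * RR -> T) :=
  forall V : set T, open V -> disk_open [set x | disk x /\ V (phi x)].

Lemma dcontP {T : topologicalType} (phi : RR * RR -> T) : wc disk phi <-> dcont phi.
Proof.
split => h V oV.
  have [W oW hW] := h V oV; exists W; split => //.
  rewrite hW; apply/seteqP; split => x /= [a b]; split => //.
have [W [oW hW]] := h V oV; exists W => //.
rewrite -[W `&` disk]hW; apply/seteqP; split => x /= [a b]; split => //.
Qed.

Definition ext (S : Type) (base : S -> RR * RR) (T : Type) (phi : S -> RR * RR -> T) (c : T)
  : hh_pt base -> T :=
  fun y => match y with None => c | Some q => phi (sval q).1 (sval q).2 end.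

Lemma hh_inj_base (S : Type) (base : S -> RR * RR) s : hh_inj base s (base s) = None.
Proof. by rewrite /hh_inj; case: pselect => // -[]. Qed.

Lemma ext_inj (S : Type) (base : S -> RR * RR) (T : Type) (phi : S -> RR * RR -> T) (c : T) s x :
  disk x -> phi s (base s) = c -> ext phi c (hh_inj base s x) = phi s x.
Proof.
move=> dx hc; rewrite /hh_inj; case: pselect => h //=.
case: (pselect (x = base s)) => [->|ne] //; exfalso; exact: h (conj dx ne).
Qed.

Lemma ext_open1 (S : Type) (base : S -> RR * RR) (T : topologicalType) (phi : S -> RR * RR -> T) (c : T) :
  (forall s, phi s (base s) = c) -> (forall s, dcont (phi s)) ->
  forall V, open V -> forall s, disk_open [set x | disk x /\ (ext phi c @^-1` V) (hh_inj base s x)].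
Proof.
move=> hb hd V oV s; have [W [oW hW]] := hd s V oV; exists W; split => //.
rewrite -hW; apply/seteqP; split => x /= [dx h]; split => //.
  by rewrite -(ext_inj dx (hb s)).
by rewrite (ext_inj dx (hb s)).
Qed.

Definition leU := fun _ _ : unit => True.

Lemma dir_unit : directed_rel leU.
Proof. by split; [exists tt|split; [|split]] => // s t; exists tt. Qed.

Lemma ext_cont_unit (T : topologicalType) (bs : RR * RR) (phi : RR * RR -> T) :
  dcont phi -> @hh_continuous unit leU (fun _ : unit => bs) T (ext (fun _ => phi) (phi bs)).
Proof.
move=> hd V oV; split; first by apply: (@ext_open1 unit (fun _ => bs) T (fun _ => phi) (phi bs)) => //.
by move=> _; exists tt => s [_ /(_ I)].
Qed.

Lemma SD (E B : topologicalType) (p : E -> B) (cov : disk_hedgehog_covering p)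
  (bs : RR * RR) (hbs : disk bs) (phi : RR * RR -> B) (hphi : dcont phi) (e0 : E)
  (h0 : phi bs = p e0) :
  exists Phi : RR * RR -> E,
    dcont Phi /\ (forall x, disk x -> p (Phi x) = phi x) /\ Phi bs = e0.
Proof.
have [_ cv] := cov.
have [g [[hg [hpg hg0]] _]] := cv unit leU (fun _ => bs) dir_unit (fun _ => hbs) e0 None
  (ext (fun _ => phi) (phi bs)) (@ext_cont_unit B bs phi hphi) h0.
exists (fun x => g (hh_inj (fun _ => bs) tt x)); split; [|split].
- by move=> V oV; exact: ((hg V oV).1 tt).
- by move=> x dx; rewrite hpg (ext_inj dx).
- by rewrite (hh_inj_base (fun _ => bs) tt).
Qed.

Lemma SDU (E B : topologicalType) (p : E -> B) (cov : disk_hedgehog_covering p)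
  (bs : RR * RR) (hbs : disk bs) (phi : RR * RR -> B) (hphi : dcont phi) (e0 : E)
  (h0 : phi bs = p e0) (Phi1 Phi2 : RR * RR -> E) :
  dcont Phi1 -> (forall x, disk x -> p (Phi1 x) = phi x) -> Phi1 bs = e0 ->
  dcont Phi2 -> (forall x, disk x -> p (Phi2 x) = phi x) -> Phi2 bs = e0 ->
  forall x, disk x -> Phi1 x = Phi2 x.
Proof.
move=> c1 l1 b1 c2 l2 b2 x dx.
have [_ cv] := cov.
have [g [_ hu]] := cv unit leU (fun _ => bs) dir_unit (fun _ => hbs) e0 None
  (ext (fun _ => phi) (phi bs)) (@ext_cont_unit B bs phi hphi) h0.
have key : forall Phi, dcont Phi -> (forall x, disk x -> p (Phi x) = phi x) -> Phi bs = e0 ->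
    ext (fun _ => Phi) e0 = g.
  move=> Phi c l b; apply/esym/hu; split.
    by rewrite -b; exact: (@ext_cont_unit E bs Phi c).
  split => //; case => [[[s y] [dy ny]]|] /=; first exact: (l y dy).
  by rewrite h0.
have := congr1 (fun f => f (hh_inj (fun _ => bs) tt x)) (etrans (key _ c1 l1 b1) (esym (key _ c2 l2 b2))).
by rewrite /= !(ext_inj dx).
Qed.

Section C.
Context {T : topologicalType}.
Lemma cD (f g : T -> RR) x : {for x, continuous f} -> {for x, continuous g} -> {for x, continuous (fun y => f y + g y)}.
Proof. move=> a b; exact: (@continuousD _ RR^o _ f g x a b). Qed.
Lemma cB (f g : T -> RR) x : {for x, continuous f} -> {for x, continuous g} -> {for x, continuous (fun y => f y - g y)}.
Proof. move=> a b; exact: (@continuousB _ RR^o _ f g x a b). Qed.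
Lemma cM (f g : T -> RR) x : {for x, continuous f} -> {for x, continuous g} -> {for x, continuous (fun y => f y * g y)}.
Proof. move=> a b; exact: (@continuousM _ _ f g x a b). Qed.
Lemma cN (f : T -> RR) x : {for x, continuous f} -> {for x, continuous (fun y => `|f y|)}.
Proof. move=> a; apply: (@continuous_comp _ _ _ f (fun y : RR => `|y|)) => //. exact: (@norm_continuous _ RR^o). Qed.
Lemma cC (c : RR) x : {for x, continuous (fun _ : T => c)}.
Proof. exact: cvg_cst. Qed.
End C.

Lemma fst_cont : continuous (fun q : RR * RR => q.1).
Proof. move=> q; exact: cvg_fst. Qed.
Lemma snd_cont : continuous (fun q : RR * RR => q.2).
Proof. move=> q; exact: cvg_snd. Qed.

Definition bsP : RR * RR := (-1, 0).
Definition rr (q : RR * RR) : RR := (q.1 + 1) / 2.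
Definition cpath (t : RR) : RR * RR := (2 * t - 1, 0).

Lemma rr_cont : continuous rr.
Proof. move=> q; apply: (@cM _ (fun q : RR * RR => q.1 + 1) (fun _ => 2^-1)); [apply: cD; [exact: fst_cont|exact: cC]|exact: cC]. Qed.

Lemma cpath_cont : continuous cpath.
Proof.
move=> t. rewrite /continuous_at. apply: (@cvg_pair _ _ _ (nbhs t) (nbhs (2*t-1 : RR)) (nbhs (0:RR))); last exact: cvg_cst.
apply: (@cB _ (fun t : RR => 2 * t) (fun _ => 1)); [|exact: cC].
by apply: (@cM _ (fun _ => 2) id); [exact: cC|exact: cvg_id].
Qed.

Lemma disk_bsP : disk bsP.
Proof. rewrite /disk /bsP /=; lra. Qed.

Lemma rr_unitI x : disk x -> unitI (rr x).
Proof. rewrite /disk /unitI /rr /= => h; apply/andP; split; nra. Qed.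

Lemma cpath_disk t : unitI t -> disk (cpath t).
Proof. rewrite /disk /unitI /cpath /= => /andP [h1 h2]; nra. Qed.

Lemma rr_cpath t : rr (cpath t) = t.
Proof. by rewrite /rr /cpath /=; field. Qed.

Lemma rr_bsP : rr bsP = 0.
Proof. by rewrite /rr /bsP /= addNr mul0r. Qed.

Lemma cpath0 : cpath 0 = bsP.
Proof. by rewrite /cpath /bsP mulr0 add0r. Qed.

Lemma path_dcont (T : topologicalType) (g : RR -> T) : is_path g -> dcont (fun x => g (rr x)).
Proof.
move=> /wcP h; apply/dcontP; exact: (wc_comp h rr_cont rr_unitI).
Qed.

Lemma path_dcont_post (T U : topologicalType) (g : RR -> T) (f : T -> U) :
  is_path g -> continuous f -> dcont (fun x => f (g (rr x))).
Proof.
move=> /wcP h hf; apply/dcontP; exact: (wc_post (wc_comp h rr_cont rr_unitI) hf).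
Qed.

Lemma dcont_path (T : topologicalType) (Phi : RR * RR -> T) (c : RR -> RR * RR) :
  dcont Phi -> continuous c -> (forall t, unitI t -> disk (c t)) -> is_path (fun t => Phi (c t)).
Proof. move=> /dcontP h hc hd; apply/wcP; exact: (wc_comp h hc hd). Qed.

Lemma PL_unique (E B : topologicalType) (p : E -> B) (cov : disk_hedgehog_covering p)
  (g d : RR -> E) : is_path g -> is_path d -> (forall t, unitI t -> p (g t) = p (d t)) ->
  g 0 = d 0 -> forall t, unitI t -> g t = d t.
Proof.
move=> pg pd hp h0 t ht.
have e1 : g (rr bsP) = g 0 by rewrite rr_bsP.
have e2 : d (rr bsP) = g 0 by rewrite rr_bsP.
have e3 : p (g (rr bsP)) = p (g 0) by rewrite rr_bsP.
have := @SDU E B p cov bsP disk_bsP (fun x => p (g (rr x))) (path_dcont_post pg cov.1)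
  (g 0) e3 (fun x => g (rr x)) (fun x => d (rr x))
  (path_dcont pg) (fun x _ => erefl) e1
  (path_dcont pd) (fun x dx => esym (hp _ (rr_unitI dx))) e2
  (cpath t) (cpath_disk ht).
by rewrite rr_cpath.
Qed.

Lemma PL_exist (E B : topologicalType) (p : E -> B) (cov : disk_hedgehog_covering p)
  (g : RR -> B) (e0 : E) : is_path g -> g 0 = p e0 -> exists d, is_lift p g d /\ d 0 = e0.
Proof.
move=> pg h0.
have e1 : g (rr bsP) = p e0 by rewrite rr_bsP.
have [Phi [cP [lP bP]]] := @SD E B p cov bsP disk_bsP (fun x => g (rr x)) (path_dcont pg)
  e0 e1.
exists (fun t => Phi (cpath t)); split; last by rewrite cpath0.
split; first exact: (dcont_path cP cpath_cont cpath_disk).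
by move=> t ht; rewrite lP ?rr_cpath //; exact: cpath_disk.
Qed.

Lemma is_path_cst (T : topologicalType) (y : T) : is_path (fun _ : RR => y).
Proof. apply/wcP; exact: wc_cst. Qed.

Definition clamp (x : RR) : RR := (`|x| - `|x - 1| + 1) / 2.

Lemma clamp_cont : continuous clamp.
Proof.
move=> x; apply: (@cM _ (fun x : RR => `|x| - `|x - 1| + 1) (fun _ => 2^-1)); [|exact: cC].
apply: (@cD _ (fun x : RR => `|x| - `|x - 1|) (fun _ => 1)); [|exact: cC].
apply: (@cB _ (fun x : RR => `|x|) (fun x => `|x - 1|)); apply: cN.
  exact: cvg_id.
by apply: (@cB _ id (fun _ => 1)); [exact: cvg_id| exact: cC].
Qed.

Lemma clamp_unitI x : unitI (clamp x).
Proof.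
rewrite /unitI /clamp /=; apply/andP.
have [h1|h1] := lerP 0 x; have [h2|h2] := lerP 0 (x - 1).
- by rewrite (ger0_norm h1) (ger0_norm h2); split; lra.
- by rewrite (ger0_norm h1) (ltr0_norm h2); split; lra.
- by rewrite (ltr0_norm h1) (ger0_norm h2); split; lra.
- by rewrite (ltr0_norm h1) (ltr0_norm h2); split; lra.
Qed.

Lemma clamp_id x : unitI x -> clamp x = x.
Proof.
rewrite /unitI /clamp /= => /andP [h1 h2].
have h3 : x - 1 <= 0 by lra.
rewrite (ger0_norm h1) (ler0_norm h3); lra.
Qed.

Definition hf : RR := 2^-1.
Definition psi (q : RR * RR) : RR * RR := (clamp (q.1 + hf), clamp (q.2 + hf)).
Definition edg (u0 v0 du dv : RR) (t : RR) : RR * RR := (u0 + du * t, v0 + dv * t).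
Definition bsQ : RR * RR := (- hf, - hf).

Lemma psi_cont : continuous psi.
Proof.
move=> q; rewrite /continuous_at.
apply: (@cvg_pair _ _ _ (nbhs q) (nbhs (clamp (q.1 + hf))) (nbhs (clamp (q.2 + hf)))).
  apply: (@continuous_comp _ _ _ (fun q : RR * RR => q.1 + hf) clamp); last exact: clamp_cont.
  by apply: cD; [exact: fst_cont|exact: cC].
apply: (@continuous_comp _ _ _ (fun q : RR * RR => q.2 + hf) clamp); last exact: clamp_cont.
by apply: cD; [exact: snd_cont|exact: cC].
Qed.

Lemma psi_sq q : unitSq (psi q).
Proof. by split; exact: clamp_unitI. Qed.

Lemma edg_cont u0 v0 du dv : continuous (edg u0 v0 du dv).
Proof.
move=> t; rewrite /continuous_at.
apply: (@cvg_pair _ _ _ (nbhs t) (nbhs (u0 + du * t)) (nbhs (v0 + dv * t))).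
  by apply: (@cD _ (fun _ => u0) (fun t => du * t)); [exact: cC|apply: (@cM _ (fun _ => du) id); [exact: cC|exact: cvg_id]].
by apply: (@cD _ (fun _ => v0) (fun t => dv * t)); [exact: cC|apply: (@cM _ (fun _ => dv) id); [exact: cC|exact: cvg_id]].
Qed.

Lemma disk_sq u v : - hf <= u <= hf -> - hf <= v <= hf -> disk (u, v).
Proof. rewrite /disk /hf /= => /andP [h1 h2] /andP [h3 h4]; nra. Qed.

Lemma disk_bsQ : disk bsQ.
Proof. apply: disk_sq; rewrite /hf; apply/andP; split; lra. Qed.

Lemma clamp_eq x y : x = y -> unitI y -> clamp x = y.
Proof. by move=> -> /clamp_id. Qed.

Definition cb := edg (- hf) (- hf) 1 0.
Definition cr := edg hf (- hf) 0 1.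
Definition cl := edg (- hf) (- hf) 0 1.
Definition ct := edg (- hf) hf 1 0.

Ltac edge_tac := move=> /andP [h1 h2];
  rewrite /psi /cb /cr /cl /ct /edg /= ?/disk; try apply: disk_sq; try congr pair;
  try apply: clamp_eq; rewrite /unitI /hf /=; try (apply/andP; split); lra.

Lemma psi_cb t : unitI t -> psi (cb t) = (t, 0).  Proof. edge_tac. Qed.
Lemma psi_cr t : unitI t -> psi (cr t) = (1, t).  Proof. edge_tac. Qed.
Lemma psi_cl t : unitI t -> psi (cl t) = (0, t).  Proof. edge_tac. Qed.
Lemma psi_ct t : unitI t -> psi (ct t) = (t, 1).  Proof. edge_tac. Qed.
Lemma disk_cb t : unitI t -> disk (cb t).  Proof. edge_tac. Qed.
Lemma disk_cr t : unitI t -> disk (cr t).  Proof. edge_tac. Qed.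
Lemma disk_cl t : unitI t -> disk (cl t).  Proof. edge_tac. Qed.
Lemma disk_ct t : unitI t -> disk (ct t).  Proof. edge_tac. Qed.

Lemma cb0 : cb 0 = bsQ.  Proof. by rewrite /cb /edg !mulr0 !addr0. Qed.
Lemma cl0 : cl 0 = bsQ.  Proof. by rewrite /cl /edg !mulr0 !addr0. Qed.
Lemma cr0 : cr 0 = cb 1.  Proof. rewrite /cb /cr /cl /ct /edg /hf; congr pair; lra. Qed.
Lemma ct0 : ct 0 = cl 1.  Proof. rewrite /cb /cr /cl /ct /edg /hf; congr pair; lra. Qed.
Lemma ct1 : ct 1 = cr 1.  Proof. rewrite /cb /cr /cl /ct /edg /hf; congr pair; lra. Qed.

Lemma unitI0 : unitI 0.  Proof. by rewrite /unitI /= lexx ler01. Qed.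
Lemma unitI1 : unitI 1.  Proof. by rewrite /unitI /= lexx ler01. Qed.

Lemma HL (E B : topologicalType) (p : E -> B) (cov : disk_hedgehog_covering p)
  (b0 : B) (al be : RR -> B) (la lbt : RR -> E) :
  loop_homotopic b0 al be -> is_lift p al la -> is_lift p be lbt ->
  lbt 0 = la 0 -> lbt 1 = la 1.
Proof.
move=> [H [hc [hb [ht hs]]]] [pla lla] [plb llb] e.
have wH : wc unitSq H by apply/wcP.
have dphi : dcont (fun q => H (psi q)).
  by apply/dcontP; exact: (wc_comp wH psi_cont (fun z _ => psi_sq z)).
have psibs : psi bsQ = (0, 0) by rewrite -cb0 psi_cb //; exact: unitI0.
have hb0 : H (psi bsQ) = p (la 0) by rewrite psibs lla ?hb //; exact: unitI0.
have [Phi [cP [lP bP]]] := @SD E B p cov bsQ disk_bsQ _ dphi (la 0) hb0.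
have pcb : is_path (fun t => Phi (cb t)) := dcont_path cP (@edg_cont _ _ _ _) disk_cb.
have bot : forall t, unitI t -> la t = Phi (cb t).
  apply: (PL_unique cov pla pcb).
  - by move=> t h /=; rewrite lla // (lP _ (disk_cb h)) psi_cb // hb.
  - by rewrite /= cb0 bP.
have b0E : p (la 1) = b0 by rewrite (lla 1 unitI1) -(hb 1 unitI1); exact: (hs 0 unitI0).2.
have pcr : is_path (fun t => Phi (cr t)) := dcont_path cP (@edg_cont _ _ _ _) disk_cr.
have r1 : forall t, unitI t -> p (Phi (cr t)) = p (la 1).
  by move=> t h; rewrite /= (lP _ (disk_cr h)) psi_cr // b0E; exact: (hs t h).2.
have r2 : Phi (cr 0) = la 1 by rewrite /= cr0 -bot //; exact: unitI1.
have rgt := PL_unique cov pcr (@is_path_cst E (la 1)) r1 r2.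
have e0E : p (la 0) = b0 by rewrite (lla 0 unitI0) -(hb 0 unitI0); exact: (hs 0 unitI0).1.
have pcl : is_path (fun t => Phi (cl t)) := dcont_path cP (@edg_cont _ _ _ _) disk_cl.
have l1 : forall t, unitI t -> p (Phi (cl t)) = p (la 0).
  by move=> t h; rewrite /= (lP _ (disk_cl h)) psi_cl // e0E; exact: (hs t h).1.
have l2 : Phi (cl 0) = la 0 by rewrite /= cl0 bP.
have lft := PL_unique cov pcl (@is_path_cst E (la 0)) l1 l2.
have pct : is_path (fun t => Phi (ct t)) := dcont_path cP (@edg_cont _ _ _ _) disk_ct.
have top : forall t, unitI t -> lbt t = Phi (ct t).
  apply: (PL_unique cov plb pct).
  - by move=> t h; rewrite /= llb // (lP _ (disk_ct h)) psi_ct // ht.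
  - by rewrite /= ct0 lft ?e //; exact: unitI1.
by rewrite (top 1 unitI1) /= ct1 (rgt 1 unitI1).
Qed.

Lemma disk_fst x : disk x -> x.1 = -1 -> x = bsP.
Proof.
case: x => a b; rewrite /disk /bsP /= => h e; subst a.
have : b ^+ 2 <= 0 by lra.
by move=> h2; have -> : b = 0 by nra.
Qed.

Lemma indist (E B : topologicalType) (p : E -> B) (cov : disk_hedgehog_covering p)
  (e0 e1 : E) : p e1 = p e0 -> (forall W, open W -> W e0 -> W e1) -> e1 = e0.
Proof.
move=> hp hW.
pose Phi2 := fun x : RR * RR => if pselect (x = bsP) is left _ then e0 else e1.
have c1 : dcont (fun _ : RR * RR => e0) by apply/dcontP; exact: wc_cst.
have cphi : dcont (fun _ : RR * RR => p e0) by apply/dcontP; exact: wc_cst.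
have c2 : dcont Phi2.
  move=> V oV; case: (pselect (V e0)) => h0.
    exists setT; split; first exact: openT.
    apply/seteqP; split => x /=.
      by move=> [dx _]; split.
    move=> [_ dx]; split => //; rewrite /Phi2; case: pselect => _ //; exact: hW.
  case: (pselect (V e1)) => h1; last first.
    exists set0; split; first exact: open0.
    apply/seteqP; split => x /=.
      by move=> [dx]; rewrite /Phi2; case: pselect.
    by move=> [].
  exists [set q : RR * RR | q.1 <> -1]; split.
    have := proj1 (continuousP _) fst_cont (~` [set x : RR | x = -1]).
    by apply; rewrite openC; exact: closed_eq.
  apply/seteqP; split => x /=.
    move=> [dx]; rewrite /Phi2; case: pselect => // ne _; split => //.
    by move=> e; apply: ne; exact: disk_fst.
  move=> [ne dx]; split => //; rewrite /Phi2; case: pselect => // ex.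
  by exfalso; apply: ne; rewrite ex.
have d10 : disk (1, 0) by rewrite /disk /=; lra.
have l2 : forall x, disk x -> p (Phi2 x) = p e0.
  by move=> x dx; rewrite /Phi2; case: pselect.
have b2 : Phi2 bsP = e0 by rewrite /Phi2; case: pselect.
have := @SDU E B p cov bsP disk_bsP (fun _ => p e0) cphi e0 erefl
  (fun _ => e0) Phi2 c1 (fun _ _ => erefl) erefl
  c2 l2 b2 (1, 0) d10.
rewrite /Phi2; case: pselect => [eq|ne]; last by move=> ->.
move: eq => /(congr1 fst) /=; rewrite /bsP /= => h; exfalso; clear -h; lra.
Qed.

Lemma near_lemma (E B : topologicalType) (p : E -> B) (cov : disk_hedgehog_covering p)
  (b0 : B) (al : RR -> B) (la : RR -> E) :
  small_loop b0 al -> is_lift p al la -> p (la 0) = b0 ->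
  forall W, open W -> W (la 0) -> W (la 1).
Proof.
move=> [hl hsm] [pla lla] pe0 W oW We0.
pose S := ({U : set B | nbhs b0 U} * nat)%type.
pose leS := fun s t : S => sval t.1 `<=` sval s.1 /\ (s.2 <= t.2)%N.
have dirS : directed_rel leS.
  split; first by exists (exist _ setT (@filterT _ _ _), 0%N).
  split; first by move=> s; split.
  split; first by move=> r s t [a1 a2] [b1 b2]; split;
    [by move=> x /b1 /a1|exact: leq_trans a2 b2].
  move=> s t; exists (exist _ (sval s.1 `&` sval t.1) (filterI (svalP s.1) (svalP t.1)), maxn s.2 t.2).
  split; split => /=; first by move=> x [].
  - exact: leq_maxl.
  - by move=> x [].
  - exact: leq_maxr.
have hb : forall s : S, exists b, is_loop_at b0 b /\ (forall t, unitI t -> sval s.1 (b t)) /\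
    loop_homotopic b0 al b.
  by move=> s; exact: (hsm (sval s.1) (svalP s.1)).
have [bf hbf] := choice hb.
pose f := @ext S (fun _ => bsP) B (fun s x => bf s (rr x)) b0.
have fb : forall s : S, bf s (rr bsP) = b0.
  by move=> s; rewrite rr_bsP; exact: (hbf s).1.2.1.
have fc : @hh_continuous S leS (fun _ => bsP) B f.
  move=> V oV; split.
    apply: (@ext_open1 S (fun _ => bsP) B (fun s x => bf s (rr x)) b0) => //.
    by move=> s; apply: path_dcont; exact: (hbf s).1.1.
  move=> Vb0; exists (exist _ V (open_nbhs_nbhs (conj oV Vb0)), 0%N).
  move=> s [[hsub _] _] x dx /=; rewrite /f (ext_inj dx (fb s)).
  apply: hsub; exact: (hbf s).2.1 _ (rr_unitI dx).
have [_ cv] := cov.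
have [g [[hg [hpg hg0]] _]] := cv S leS (fun _ => bsP) dirS (fun _ => disk_bsP) (la 0) None f fc (esym pe0).
have gW : (g @^-1` W) None by rewrite /preimage /= hg0.
have [t ht] := (hg W oW).2 gW.
pose s : S := (t.1, t.2.+1).
have gst : gt_rel leS s t.
  split; first by split => //.
  by move=> [_ /=]; rewrite ltnn.
pose Phi := fun x => g (hh_inj (fun _ : S => bsP) s x).
have cP : dcont Phi by move=> V oV; exact: ((hg V oV).1 s).
have pd : is_path (fun u => Phi (cpath u)) := dcont_path cP cpath_cont cpath_disk.
have ld : is_lift p (bf s) (fun u => Phi (cpath u)).
  split => // u hu; rewrite /Phi hpg /f (ext_inj (cpath_disk hu) (fb s)) rr_cpath //.
have d0 : (fun u => Phi (cpath u)) 0 = la 0.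
  by rewrite /= /Phi cpath0 (hh_inj_base (fun _ : S => bsP) s).
have := HL cov (hbf s).2.2 (conj pla lla) ld d0.
move=> /= <-; exact: (ht s gst _ (cpath_disk unitI1)).
Qed.

Unset Implicit Arguments.
Set Strict Implicit.

Theorem proposition7p8 (E B : topologicalType) (p : E -> B) (b0 : B) :
  path_connected B ->
  disk_hedgehog_covering p ->
  forall alpha : RR -> B, small_loop b0 alpha ->
    monodromy_equiv p alpha (cst_loop b0).
Proof.
move=> _ cov al hs la lb [pla lla] [plb llb] e.
have pe0 : p (la 0) = b0 by rewrite (lla 0 unitI0); exact: hs.1.2.1.
have pe1 : p (la 1) = b0 by rewrite (lla 1 unitI1); exact: hs.1.2.2.
have lbc := PL_unique cov plb (@is_path_cst E (la 0))
  (fun t h => etrans (llb t h) (esym pe0)) (esym e).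
rewrite (lbc 1 unitI1).
apply: (indist cov); first by rewrite pe0 pe1.
exact: (near_lemma cov hs (conj pla lla) pe0).
Qed.
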